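(* Let $n\ge2$. For $j\le m$ let $P_j^m$ denote the joint distribution of $(\tau_1^m,\dots,\tau_j^m)$. Then the law $P_{n-1}^n$ of $(\tau_1^n,\dots,\tau_{n-1}^n)$ has, with respect to the law $P_{n-1}^{n-1}$ of $(\tau_1^{n-1},\dots,\tau_{n-1}^{n-1})$, the density \[ \frac{P_{n-1}^n(t_1,\dots,t_{n-1})}{P_{n-1}^{n-1}(t_1,\dots,t_{n-1})} = K_n\Big(1-\frac1n\Big)^{(n-1)\big(\frac{1}{n-1}\sum_{i=1}^{n-1}(t_i-\log(n-1))\big)}, \] for $(t_1,\dots,t_{n-1})$ in the support of $P_{n-1}^{n-1}$.
   Context: For $m\ge1$, $\tau_1^m,\dots,\tau_m^m$ are independent with $\tau_i^m\sim\operatorname{Geom}\big(\frac{m-i+1}{m}\big)$, where $\operatorname{Geom}(p)$ is the geometric law on $\{1,2,\dots\}$, $P(k)=p(1-p)^{k-1}$ (with $0^0=1$). $K_n=n\big(1-\frac1n\big)^{(n-1)\log(n-1)}$. *)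

(* Defs.v *)
From Stdlib Require Import Reals.
Open Scope R_scope.

(* Geometric law on {1,2,...}: P(k) = p (1-p)^(k-1), P(0) = 0; 0^0 = 1 via pow. *)
Definition geom_pmf (p : R) (k : nat) : R :=
  match k with
  | O => 0
  | S k' => p * (1 - p) ^ k'
  end.

(* Parameter of tau_i^m : (m - i + 1)/m  (1-indexed i). *)
Definition tau_param (m i : nat) : R := INR (m + 1 - i) / INR m.

Fixpoint prod1 (j : nat) (f : nat -> R) : R :=
  match j with
  | O => 1
  | S j' => prod1 j' f * f (S j')
  end.

Fixpoint sum1 (j : nat) (f : nat -> R) : R :=
  match j with
  | O => 0
  | S j' => sum1 j' f + f (S j')
  end.

(* P_j^m(t_1,...,t_j): joint pmf of (tau_1^m,...,tau_j^m) (independent),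
   t given as a function nat -> nat, only values t 1 .. t j are used. *)
Definition Pjoint (m j : nat) (t : nat -> nat) : R :=
  prod1 j (fun i => geom_pmf (tau_param m i) (t i)).

Definition Kn (n : nat) : R :=
  INR n * Rpower (1 - 1 / INR n) (INR (n - 1) * ln (INR (n - 1))).

(* Main.v *)
Require Import Defs.
From Stdlib Require Import Reals Lra Lia.
Open Scope R_scope.

Fixpoint sumn1 (j : nat) (t : nat -> nat) : nat :=
  match j with O => O | S j' => (sumn1 j' t + t (S j'))%nat end.

Lemma sum1_shift (c : R) (t : nat -> nat) (j : nat) :
  sum1 j (fun i => INR (t i) - c) = INR (sumn1 j t) - INR j * c.
Proof.
  induction j as [|j IH]; simpl sum1; simpl sumn1.
  - simpl; ring.
  - rewrite IH, plus_INR, S_INR; ring.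
Qed.

Lemma factor (N i k : nat) : (1 <= N)%nat -> (1 <= i <= N)%nat ->
  geom_pmf (tau_param (S N) i) k =
  (INR N + 2 - INR i) / (INR N + 1 - INR i) * (1 - 1 / INR (S N)) ^ k *
  geom_pmf (tau_param N i) k.
Proof.
  intros HN Hi.
  assert (HN' : 1 <= INR N) by (apply (le_INR 1); lia).
  assert (Hi1 : 1 <= INR i) by (apply (le_INR 1); lia).
  assert (HiN : INR i <= INR N) by (apply le_INR; lia).
  unfold tau_param.
  rewrite (minus_INR (S N + 1) i) by lia.
  rewrite (minus_INR (N + 1) i) by lia.
  rewrite !plus_INR, !S_INR. simpl (INR 1). rewrite ?Rplus_0_l.
  destruct k as [|k]; simpl geom_pmf.
  - ring.
  - set (a := 1 - 1 / (INR N + 1)).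
    assert (E : 1 - (INR N + 1 + 1 - INR i) / (INR N + 1)
              = a * (1 - (INR N + 1 - INR i) / INR N)).
    { unfold a; field; lra. }
    rewrite E, Rpow_mult_distr. simpl pow.
    unfold a; field; lra.
Qed.

Lemma prod_rel (N : nat) (t : nat -> nat) : (1 <= N)%nat -> forall j, (j <= N)%nat ->
  prod1 j (fun i => geom_pmf (tau_param (S N) i) (t i)) =
  (INR N + 1) / (INR N + 1 - INR j) * (1 - 1 / INR (S N)) ^ (sumn1 j t) *
  prod1 j (fun i => geom_pmf (tau_param N i) (t i)).
Proof.
  intros HN j. induction j as [|j IH]; intros Hj.
  - simpl. field. assert (0 <= INR N) by apply pos_INR. lra.
  - simpl prod1. simpl sumn1. rewrite IH by lia.
    rewrite factor by lia.
    assert (INR j + 1 <= INR N) by (rewrite <- S_INR; apply le_INR; lia).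
    rewrite pow_add, !S_INR.
    set (u := (_ ^ sumn1 j t)). set (v := (_ ^ t (S j))).
    set (P := prod1 j _). set (g := geom_pmf _ _).
    field. lra.
Qed.

Theorem lemma3p6 (n : nat) (t : nat -> nat) :
  (2 <= n)%nat ->
  0 < Pjoint (n - 1) (n - 1) t ->
  Pjoint n (n - 1) t / Pjoint (n - 1) (n - 1) t =
  Kn n * Rpower (1 - 1 / INR n)
    (INR (n - 1) *
     (1 / INR (n - 1) * sum1 (n - 1) (fun i => INR (t i) - ln (INR (n - 1))))).
Proof.
  intros Hn Hpos.
  destruct n as [|N]; [lia|].
  replace (S N - 1)%nat with N in * by lia.
  unfold Kn. replace (S N - 1)%nat with N by lia.
  assert (HN' : 1 <= INR N) by (apply (le_INR 1); lia).
  unfold Pjoint in *.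
  rewrite (prod_rel N t) by lia.
  rewrite sum1_shift.
  assert (Ha : 0 < 1 - 1 / INR (S N)).
  { rewrite S_INR. apply Rlt_0_minus. apply (Rmult_lt_reg_r (INR N + 1)); [lra|].
    field_simplify; lra. }
  set (a := 1 - 1 / INR (S N)) in *.
  replace (INR N * (1 / INR N * (INR (sumn1 N t) - INR N * ln (INR N))))
    with (INR (sumn1 N t) - INR N * ln (INR N)) by (field; lra).
  rewrite (Rmult_assoc (INR (S N))), <- Rpower_plus.
  replace (INR N * ln (INR N) + (INR (sumn1 N t) - INR N * ln (INR N)))
    with (INR (sumn1 N t)) by ring.
  rewrite Rpower_pow by exact Ha.
  rewrite S_INR. field. lra.
Qed.
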